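(* Let $\overline{\mathbf{x}}\in\mathcal{F}^R(\mathbf{s})$ be any feasible fractional flow, and let $\mathbf{x}^\bullet$ be the integral solution obtained by applying the rounding procedure $\texttt{PSRR}$ to each player's fractional flow $\overline{\mathbf{x}}_i$. Then, for $\beta>0$, with probability at least $1-\beta$, $$\phi(\mathbf{x}^\bullet)\le\phi(\overline{\mathbf{x}})+m(\gamma+1)\sqrt{2n\ln(m/\beta)}.$$
   Context: Routing game $\Gamma=(G,\ell,\mathbf{s})$: directed graph $G=(V,E)$, $m=|E|$, latencies $\ell_e$ non-decreasing, convex, twice differentiable, $\ell_e(n)\le n$, $\gamma$-Lipschitz; $n$ players with demands $s_i=(s_i^1,s_i^2)$. $\mathcal{F}^R(\mathbf{s})\subseteq[0,1]^{n\times m}$: each $\mathbf{x}_i$ is a fractional unit flow from $s_i^1$ to $s_i^2$. $\phi(\mathbf{x})=\frac1n\sum_i\sum_ex_{i,e}\ell_e(\sum_jx_{j,e})$. $\texttt{PSRR}(\overline{\mathbf{x}}_i)$: decompose $\overline{\mathbf{x}}_i$ into $s_i^1$-to-$s_i^2$ paths $P_j$ with weights $w_j$ (for each path, $w_j=\min_{e\in P_j}\overline x_{i,e}$, then subtract $w_j$ on the edges of $P_j$), sample a path $P$ with $\Pr[P=P_j]=w_j$ (independently across players), and set $x^\bullet_{i,e}=\mathbb{1}[e\in P]$. *)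

(* Defs.v *)
From HB Require Import structures.
From mathcomp Require Import all_boot all_order all_algebra.
From mathcomp Require Import all_classical all_reals all_analysis.
Set Implicit Arguments. Unset Strict Implicit. Unset Printing Implicit Defensive.
Import Order.TTheory GRing.Theory Num.Theory.
Local Open Scope ring_scope.

Section RoutingDefs.
Variables (R : realType) (V E : finType) (src dst : E -> V).

Fixpoint is_walk (u v : V) (p : seq E) : bool :=
  if p is e :: p' then (src e == u) && is_walk (dst e) v p' else u == v.

Definition is_path (u v : V) (p : seq E) : bool :=
  is_walk u v p && uniq (u :: map dst p).

Definition frac_unit_flow (s1 s2 : V) (x : E -> R) : Prop :=
  (forall e, 0 <= x e <= 1) /\
  (forall v : V, \sum_(e | src e == v) x e - \sum_(e | dst e == v) x e
                 = (v == s1)%:R - (v == s2)%:R).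

Definition feasible (n : nat) (s1 s2 : 'I_n -> V) (x : 'I_n -> E -> R) : Prop :=
  forall i, frac_unit_flow (s1 i) (s2 i) (x i).

Definition phi (n : nat) (l : E -> R -> R) (x : 'I_n -> E -> R) : R :=
  n%:R^-1 * \sum_(i < n) \sum_(e : E) x i e * l e (\sum_(j < n) x j e).

(* Output of the path decomposition step of PSRR for one player:
   paths P j with weights w j (j < K), forming a probability distribution,
   every path of positive weight is an s1-to-s2 path, and the paths'
   total weight on each edge does not exceed the fractional flow. *)
Definition path_decomposition (K : nat) (s1 s2 : V) (x : E -> R)
    (w : 'I_K -> R) (P : 'I_K -> seq E) : Prop :=
  [/\ forall j, 0 <= w j,
      \sum_(j < K) w j = 1,
      forall j, 0 < w j -> is_path s1 s2 (P j) &
      forall e, \sum_(j < K) w j * (e \in P j)%:R <= x e].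

Definition rounded (n K : nat) (P : 'I_n -> 'I_K -> seq E)
    (c : {ffun 'I_n -> 'I_K}) : 'I_n -> E -> R :=
  fun i e => (e \in P i (c i))%:R.

(* probability of an event under independent sampling (player i picks j w.p. w i j) *)
Definition prob (n K : nat) (w : 'I_n -> 'I_K -> R)
    (A : pred {ffun 'I_n -> 'I_K}) : R :=
  \sum_(c | A c) \prod_(i < n) w i (c i).

End RoutingDefs.

(* Main.v *)
Require Import Defs.
From HB Require Import structures.
From mathcomp Require Import all_boot all_order all_algebra.
From mathcomp Require Import all_classical all_reals all_analysis.
From mathcomp Require Import ring lra.
Import Order.TTheory GRing.Theory Num.Theory.
Local Open Scope ring_scope.

Section A.
Variable R : realType.

Lemma mgf_key (p y : R) : 0 <= p <= 1 -> 0 <= y ->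
  p * expR y <= (p + y) * expR (y * p + y ^+ 2 / 2).
Proof.
move=> /andP[p0 p1] y0.
set z := y * p + y ^+ 2 / 2 - y.
have -> : y * p + y ^+ 2 / 2 = y + z by rewrite /z; ring.
rewrite expRD (mulrC (expR y)) mulrA; apply: ler_wpM2r; first exact: expR_ge0.
have h1 := expR_ge1Dx z.
have h2 : p <= (p + y) * (1 + z).
  rewrite /z.
  have q : 0 <= y * (1 - (1-p) + (1-p)^+2 + y/2 - 3*(1-p)*y/2 + y^+2/2).
    apply: mulr_ge0 => //.
    have s := sqr_ge0 (y + (1 - 3*(1-p))/2).
    nra.
  nra.
apply: le_trans h2 _; apply: ler_wpM2l; lra.
Qed.

Lemma mgf_bound (p y : R) : 0 <= p <= 1 -> 0 <= y ->
  1 - p + p * expR y <= expR (y * p + y ^+ 2 / 2).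
Proof.
move=> hp y0.
pose F := fun u : R => expR (u * p + u ^+ 2 / 2) - (1 - p + p * expR u).
pose dF := fun u : R => (p + u) * expR (u * p + u ^+ 2 / 2) - p * expR u.
have D : forall u : R, is_derive u (1:R) F (dF u).
  move=> u.
  pose g := fun v : R => v * p + v ^+ 2 / 2.
  have hg : is_derive u (1:R) g (p + u).
    have hx : is_derive u (1:R) id 1 := is_derive_id u 1.
    have hX := is_deriveX 2 hx.
    have -> : g = p \*: (@id R) + (2^-1 : R) \*: ((@id R) ^+ 2) by apply/funext => v; rewrite /g /= mulrC [_ / 2]mulrC.
    have := is_deriveD (is_deriveZ p hx) (is_deriveZ (2^-1) hX).
    move=> H; apply: (is_derive_eq H).
    rewrite /GRing.scale /= !mulr1 expr1 mulrA mulVf ?mul1r //.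
  have h2 : is_derive u (1:R) (expR \o g) (expR (g u) * (p + u)).
    exact: is_derive1_comp.
  have h3 : is_derive u (1:R) (fun v => 1 - p + p * expR v) (p * expR u).
    have -> : (fun v => 1 - p + p * expR v) = cst (1 - p) + p \*: expR by apply/funext.
    have H := is_deriveD (is_derive_cst (1 - p) u (1:R)) (is_deriveZ p (is_derive_expR u)).
    apply: (is_derive_eq H).
    by rewrite add0r.
  have -> : F = (expR \o g) - (fun v => 1 - p + p * expR v) by apply/funext.
  have -> : dF u = expR (g u) * (p + u) - p * expR u by rewrite /dF mulrC.
  exact: is_deriveB.
have cF : ({within `[0, y], continuous F})%classic.
  apply: continuous_subspaceT => v.
  exact/differentiable_continuous/derivable1_diffP/(@ex_derive _ _ _ _ _ _ _ (D v)).
have [c] := MVT_segment y0 (fun u _ => D u) cF.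
rewrite in_itv /= => /andP[c0 cy].
rewrite /F /dF !mul0r expr0n /= mul0r addr0 expR0 mulr1 subr0.
have := @mgf_key p c hp c0.
move=> k e.
have : 0 <= dF c * (y - 0) by apply: mulr_ge0; [rewrite /dF subr_ge0 | rewrite subr0].
rewrite /dF subr0 -e. lra.
Qed.

Section Prob.
Variables (n K : nat) (w : 'I_n -> 'I_K -> R).
Hypothesis w0 : forall i j, 0 <= w i j.

Lemma sum_prod_ffun (F : 'I_n -> 'I_K -> R) :
  \sum_(c : {ffun 'I_n -> 'I_K}) \prod_i F i (c i) = \prod_i \sum_j F i j.
Proof. by rewrite bigA_distr_bigA. Qed.

Lemma mu_ge0 (c : {ffun 'I_n -> 'I_K}) : 0 <= \prod_i w i (c i).
Proof. by apply: prodr_ge0 => i _. Qed.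

Lemma prob_le_sum (A : pred {ffun 'I_n -> 'I_K}) (f : {ffun 'I_n -> 'I_K} -> R) :
  (forall c, A c -> 1 <= f c) -> (forall c, 0 <= f c) ->
  prob w A <= \sum_(c : {ffun 'I_n -> 'I_K}) (\prod_i w i (c i)) * f c.
Proof.
move=> f1 f0; rewrite /prob big_mkcond /=; apply: ler_sum => c _.
case: ifP => Ac.
- by rewrite -{1}[\prod_i _]mulr1; apply: ler_wpM2l; [exact: mu_ge0|exact: f1].
- by apply: mulr_ge0; [exact: mu_ge0|exact: f0].
Qed.

Lemma prob_union (T : finType) (A : pred {ffun 'I_n -> 'I_K})
  (B : T -> pred {ffun 'I_n -> 'I_K}) :
  (forall c, A c -> exists e, B e c) ->
  prob w A <= \sum_e prob w (B e).
Proof.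
move=> AB.
apply: le_trans (@prob_le_sum A (fun c => \sum_e (B e c)%:R) _ _) _.
- move=> c /AB [e Be]; rewrite (bigD1 e) //= Be lerDl.
  by apply: sumr_ge0 => i _; apply: ler0n.
- by move=> c; apply: sumr_ge0 => i _; apply: ler0n.
rewrite le_eqVlt; apply/orP; left; apply/eqP.
under eq_bigr do rewrite mulr_sumr.
rewrite exchange_big /=; apply: eq_bigr => e _.
rewrite /prob [in RHS]big_mkcond /=; apply: eq_bigr => c _.
by case: (B e c); rewrite ?mulr1 ?mulr0.
Qed.

Lemma prob_total : (forall i, \sum_j w i j = 1) ->
  \sum_(c : {ffun 'I_n -> 'I_K}) \prod_i w i (c i) = 1.
Proof.
move=> w1; rewrite sum_prod_ffun.
by rewrite big1 // => i _; rewrite w1.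
Qed.

Lemma prob_compl (A : pred {ffun 'I_n -> 'I_K}) :
  (forall i, \sum_j w i j = 1) ->
  prob w A = 1 - prob w (predC A).
Proof.
move=> w1; rewrite -(prob_total w1) /prob [in RHS](bigID A) /=.
have -> : \sum_(c | predC A c) \prod_i w i (c i) = \sum_(c | ~~ A c) \prod_i w i (c i) by apply: eq_bigl.
by rewrite addrK.
Qed.


Lemma factor_bound (b : 'I_K -> bool) (wi : 'I_K -> R) (x lam : R) :
  (forall j, 0 <= wi j) -> \sum_j wi j = 1 -> 0 <= x <= 1 ->
  \sum_j wi j * (b j)%:R <= x -> 0 <= lam ->
  0 <= \sum_j wi j * expR (lam * ((b j)%:R - x)) <= expR (lam ^+ 2 / 2).
Proof.
move=> wi0 wi1 x01 q lam0.
apply/andP; split.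
  by apply: sumr_ge0 => j _; apply: mulr_ge0 => //; exact: expR_ge0.
have E : forall j, wi j * expR (lam * ((b j)%:R - x)) =
   expR (- (lam * x)) * (wi j + wi j * (b j)%:R * (expR lam - 1)).
  by move=> j; rewrite mulrBr expRD; case: (b j); rewrite ?mulr1 ?mulr0 ?expR0; ring.
under eq_bigr do rewrite E.
rewrite -mulr_sumr big_split /= wi1 -mulr_suml.
have e1 : 0 <= expR lam - 1 by rewrite subr_ge0 -expR0 ler_expR.
apply: le_trans (_ : expR (- (lam * x)) * (1 - x + x * expR lam) <= _).
  apply: ler_wpM2l; first exact: expR_ge0.
  have : (\sum_i wi i * (b i)%:R) * (expR lam - 1) <= x * (expR lam - 1).
    exact: ler_wpM2r.
  rewrite !mulrBr !mulr1 => h.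
  apply: le_trans (_ : 1 + (x * expR lam - x) <= _); first by rewrite lerD2l.
  by rewrite le_eqVlt; apply/orP; left; apply/eqP; ring.
apply: le_trans (_ : expR (- (lam * x)) * expR (lam * x + lam ^+ 2 / 2) <= _).
  apply: ler_wpM2l; first exact: expR_ge0.
  exact: mgf_bound.
by rewrite -expRD addrA addNr add0r.
Qed.

Lemma chernoff (b : 'I_n -> 'I_K -> bool) (x : 'I_n -> R) (lam t : R) :
  (forall i, \sum_j w i j = 1) -> (forall i, 0 <= x i <= 1) ->
  (forall i, \sum_j w i j * (b i j)%:R <= x i) -> 0 <= lam ->
  prob w (fun c => \sum_i x i + t < \sum_i (b i (c i))%:R)
    <= expR (- (lam * t) + n%:R * (lam ^+ 2 / 2)).
Proof.
move=> w1 x01 q lam0.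
apply: le_trans (@prob_le_sum _
   (fun c => expR (lam * (\sum_i ((b i (c i))%:R - x i) - t))) _ _) _.
- move=> c /= h; rewrite -[X in X <= _]expR0 ler_expR; apply: mulr_ge0 => //.
  rewrite sumrB; lra.
- by move=> c; exact: expR_ge0.
have E : forall c : {ffun 'I_n -> 'I_K},
   (\prod_i w i (c i)) * expR (lam * (\sum_i ((b i (c i))%:R - x i) - t)) =
   expR (- (lam * t)) * \prod_i (w i (c i) * expR (lam * ((b i (c i))%:R - x i))).
  move=> c; rewrite mulrBr expRD mulr_sumr expR_sum big_split /=.
  by rewrite [X in _ * X]mulrC mulrCA.
under eq_bigr do rewrite E.
rewrite -mulr_sumr (sum_prod_ffun (fun i j => w i j * expR (lam * ((b i j)%:R - x i)))).
rewrite expRD; apply: ler_wpM2l; first exact: expR_ge0.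
apply: le_trans (_ : \prod_(i < n) expR (lam ^+ 2 / 2) <= _).
  apply: ler_prod => i _; apply: factor_bound => //.
by rewrite prodr_const card_ord expRM_natl.
Qed.

End Prob.

Lemma edge_bound (le : R -> R) (g N L Lb t : R) :
  (forall x y, 0 <= x -> x <= y -> le x <= le y) -> 0 <= le 0 -> le N <= N ->
  (forall x y, 0 <= x -> 0 <= y -> `|le x - le y| <= g * `|x - y|) ->
  0 <= g -> 0 <= L <= N -> 0 <= Lb <= N -> L <= Lb + t -> 0 <= t ->
  N^-1 * (L * le L) <= N^-1 * (Lb * le Lb) + (g + 1) * t.
Proof.
move=> mono l0 lN lip g0 /andP[L0 LN] /andP[Lb0 LbN] LLb t0.
have key : L * le L <= Lb * le Lb + N * ((g + 1) * t).
  have leL0 : 0 <= le L by apply: le_trans l0 (mono _ _ _ L0).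
  have h1 : 0 <= N * ((g + 1) * t).
    by apply: mulr_ge0; [lra | apply: mulr_ge0 => //; lra].
  case: (lerP L Lb) => hL.
    have : L * le L <= Lb * le Lb by apply: ler_pM => //; apply: mono.
    lra.
  have A : le L - le Lb <= g * (L - Lb).
    have := lip _ _ L0 Lb0; rewrite (gtr0_norm (x := L - Lb)); last by lra.
    by move/(le_trans (ler_norm _)).
  have B : le L <= N by apply: le_trans (mono _ _ L0 LN) lN.
  have C : Lb * (le L - le Lb) <= N * (g * t).
    apply: le_trans (_ : Lb * (g * (L - Lb)) <= _); first exact: ler_wpM2l.
    apply: ler_pM => //; first by apply: mulr_ge0 => //; lra.
    apply: ler_wpM2l => //; lra.
  have D : (L - Lb) * le L <= t * N.
    apply: ler_pM => //; lra.
  have -> : L * le L = Lb * le Lb + (Lb * (le L - le Lb) + (L - Lb) * le L) by ring.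
  have -> : N * ((g + 1) * t) = N * (g * t) + t * N by ring.
  lra.
have N0 : 0 <= N by lra.
case: (eqVneq N 0) => [->|Nn0].
  by rewrite invr0 !mul0r add0r; apply: mulr_ge0 => //; lra.
have Ni : 0 < N^-1 by rewrite invr_gt0 lt_neqAle eq_sym Nn0 N0.
have := ler_wpM2l (ltW Ni) key.
by rewrite mulrDr (mulrA N^-1 N) mulVf // mul1r.
Qed.


Lemma phi_edge (E : finType) (n : nat) (l : E -> R -> R) (x : 'I_n -> E -> R) :
  phi l x = \sum_e n%:R^-1 * ((\sum_i x i e) * l e (\sum_j x j e)).
Proof.
rewrite /phi exchange_big mulr_sumr; apply: eq_bigr => e _.
by rewrite mulr_suml.
Qed.

End A.

Theorem lemma4p8 (R : realType) (V E : finType) (src dst : E -> V)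
  (l : E -> R -> R) (gamma : R) (n : nat) (s1 s2 : 'I_n -> V)
  (xbar : 'I_n -> E -> R) (K : nat)
  (w : 'I_n -> 'I_K -> R) (P : 'I_n -> 'I_K -> seq E) (beta : R) :
  (* latency assumptions (on the nonnegative reals) *)
  (forall e x y, 0 <= x -> x <= y -> l e x <= l e y) ->
  (forall e x y t, 0 <= x -> 0 <= y -> 0 <= t <= 1 ->
     l e (t * x + (1 - t) * y) <= t * l e x + (1 - t) * l e y) ->
  (forall e x, 0 < x -> derivable (l e) x 1 /\ derivable (derive1 (l e)) x 1) ->
  (forall e, 0 <= l e 0) ->
  (forall e, l e n%:R <= n%:R) ->
  (forall e x y, 0 <= x -> 0 <= y -> `|l e x - l e y| <= gamma * `|x - y|) ->
  (* feasible fractional flow *)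
  feasible src dst s1 s2 xbar ->
  (* PSRR path decomposition of each player's flow *)
  (forall i, path_decomposition src dst (s1 i) (s2 i) (xbar i) (w i) (P i)) ->
  0 < beta ->
  1 - beta <=
    prob w (fun c => phi l (@rounded R E n K P c) <=
      phi l xbar + #|E|%:R * (gamma + 1)
                   * Num.sqrt (2 * n%:R * ln (#|E|%:R / beta))).
Proof.
move=> mono _ _ l0 lN lip feas dec beta0.
set t := Num.sqrt _.
have t0 : 0 <= t by apply: sqrtr_ge0.
have w0 : forall i j, 0 <= w i j by move=> i j; case: (dec i).
have w1 : forall i, \sum_j w i j = 1 by move=> i; case: (dec i).
have q : forall i e, \sum_j w i j * (e \in P i j)%:R <= xbar i e.
  by move=> i e; case: (dec i) => _ _ _ ->.
have x01 : forall i e, 0 <= xbar i e <= 1 by move=> i e; case: (feas i).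
set A := (fun c => _).
rewrite (@prob_compl R n K w A w1).
suff H : prob w (predC A) <= beta by lra.
apply: le_trans (@prob_union R n K w w0 E (predC A)
  (fun e c => \sum_i xbar i e + t < \sum_i (e \in P i (c i))%:R) _) _.
  move=> c /= nA; case: (pickP (fun e => \sum_i xbar i e + t < \sum_i (e \in P i (c i))%:R)).
    by move=> e he; exists e.
  move=> none; exfalso; move/negP: nA; apply; rewrite /A.
  rewrite !phi_edge.
  have -> : #|E|%:R * (gamma + 1) * t = \sum_(e : E) (gamma + 1) * t.
    by rewrite sumr_const -[RHS]mulr_natl mulrA.
  rewrite -big_split /=; apply: ler_sum => e _.
  have g0 : 0 <= gamma.
    have := lip e 0 1 (lexx 0) ler01.
    rewrite sub0r normrN normr1 mulr1; apply: le_trans; exact: normr_ge0.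
  have sn : forall f : 'I_n -> R, (forall i, 0 <= f i <= 1) -> 0 <= \sum_i f i <= n%:R.
    move=> f f01; apply/andP; split.
      by apply: sumr_ge0 => i _; case/andP: (f01 i).
    apply: le_trans (_ : \sum_(i < n) (1:R) <= _).
      by apply: ler_sum => i _; case/andP: (f01 i).
    by rewrite sumr_const card_ord.
  apply: edge_bound => //.
  - exact: mono.
  - exact: lip.
  - apply: sn => i; rewrite /rounded; case: (_ \in _) => /=; lra.
  - by apply: sn => i; apply: x01.
  - by move: (none e) => /= /negbT; rewrite -leNgt.
set m := (#|E|%:R : R).
have per : forall e : E, prob w (fun c => \sum_i xbar i e + t < \sum_i (e \in P i (c i))%:R)
    <= beta / m.
  move=> e.
  have m0 : 0 < m by rewrite /m ltr0n; apply/card_gt0P; exists e.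
  have pge0 : forall B, 0 <= prob w B.
    by move=> B; apply: sumr_ge0 => c _; apply: prodr_ge0 => i _.
  case: (ltrP (m / beta) 1) => hmb.
    apply: le_trans (_ : 1 <= _).
      rewrite (@prob_compl R n K w _ w1); have := pge0 (predC (fun c : {ffun 'I_n -> 'I_K} => \sum_i xbar i e + t < \sum_i (e \in P i (c i))%:R)); lra.
    rewrite ler_pdivlMr // mul1r.
    by move: hmb; rewrite ltr_pdivrMr // mul1r => /ltW.
  case: (posnP n) => [n0|npos].
    have s0 : forall f : 'I_n -> R, \sum_i f i = 0.
      by move=> f; apply: big1 => i; have := ltn_ord i; rewrite {2}n0.
    rewrite /prob big1; first by apply: divr_ge0; lra.
    by move=> c; rewrite !s0; lra.
  set N := (n%:R : R).
  have N0 : 0 < N by rewrite /N ltr0n.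
  set Lg := ln (m / beta).
  have Lg0 : 0 <= Lg by apply: ln_ge0.
  have tt : t ^+ 2 = 2 * N * Lg by rewrite sqr_sqrtr //; apply: mulr_ge0 => //; lra.
  apply: le_trans (@chernoff R n K w w0 (fun i j => e \in P i j) (fun i => xbar i e) (t / N) t w1 _ _ _) _.
  - by move=> i; apply: x01.
  - by move=> i; apply: q.
  - by apply: divr_ge0 => //; lra.
  have -> : - (t / N * t) + N * ((t / N) ^+ 2 / 2) = - (t ^+ 2 / (2 * N)).
    by field; rewrite lt0r_neq0.
  rewrite tt.
  have -> : 2 * N * Lg / (2 * N) = Lg by field; rewrite lt0r_neq0.
  rewrite expRN /Lg lnK; last by rewrite posrE; apply: divr_gt0.
  by rewrite invf_div.
apply: le_trans (ler_sum _ (fun e _ => per e)) _.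
rewrite sumr_const.
case: (eqVneq #|E| 0%N) => [->|En0]; first by rewrite mulr0n; lra.
by rewrite -mulr_natr divfK // /m pnatr_eq0.
Qed.
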